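(* Let $X$ be a Banach space and $\{L(t,\tau):t\geqslant\tau\}\subset\mathcal L(X)$ a linear evolution process having exponential splitting with constant $M\geqslant1$, exponents $\gamma>\rho$ and projections $\{Q(t):t\in\mathbb R\}$, and also having exponential splitting with constant $M_*\geqslant1$, exponents $\gamma_*>\rho_*$ with $\gamma>\gamma_*$, and projections $\{Q_*(t):t\in\mathbb R\}$. Then $\mathrm{Im}(Q_*(t))\subset\mathrm{Im}(Q(t))$ and $\mathrm{Ker}(Q(t))\subset\mathrm{Ker}(Q_*(t))$ for all $t\in\mathbb R$.
   Context: A linear evolution process is a family $\{L(t,\tau):t\geqslant\tau\}\subset\mathcal L(X)$ with $L(t,t)=I$, $L(t,s)L(s,\tau)=L(t,\tau)$ for $t\geqslant s\geqslant\tau$ and $t\mapsto L(t,\tau)u$ continuous. It has exponential splitting with constant $M\geqslant1$, exponents $\gamma>\rho$ and projections $\{Q(t)\}\subset\mathcal L(X)$ if $Q(t)L(t,\tau)=L(t,\tau)Q(\tau)$ for $t\geqslant\tau$, $L(t,\tau):\mathrm{Im}Q(\tau)\to\mathrm{Im}Q(t)$ is an isomorphism (inverse denoted $L(\tau,t)$), $\|L(t,\tau)Q(\tau)\|\leqslant Me^{-\rho(t-\tau)}$ for $t\leqslant\tau$ and $\|L(t,\tau)(I-Q(\tau))\|\leqslant Me^{-\gamma(t-\tau)}$ for $t\geqslant\tau$. *)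

(* Defs.v *)
From HB Require Import structures.
From mathcomp Require Import all_boot all_order all_algebra.
From mathcomp Require Import all_classical all_reals all_analysis.
Set Implicit Arguments. Unset Strict Implicit. Unset Printing Implicit Defensive.
Import Order.TTheory GRing.Theory Num.Theory.
Import numFieldNormedType.Exports.
Local Open Scope classical_set_scope.
Local Open Scope ring_scope.

Definition bounded_linear (R : realType) (X : normedModType R) (A : X -> X) :=
  (forall (a : R) (x y : X), A (a *: x + y) = a *: A x + A y) /\ continuous A.

(* Linear evolution process {L(t,tau) : t >= tau} in L(X); L t tau is only
   meaningful for tau <= t. *)
Definition evolution_process (R : realType) (X : normedModType R)
  (L : R -> R -> X -> X) :=
  [/\ (forall t tau, tau <= t -> bounded_linear (L t tau)),
      (forall t, L t t = id),
      (forall t s tau, tau <= s -> s <= t -> L t s \o L s tau = L t tau) &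
      (forall tau (u : X), {within `[tau, +oo[, continuous (fun t => L t tau u)})].

(* For t <= tau, L(t,tau)Q(tau) denotes the inverse of the
   isomorphism L(tau,t) : Im Q(t) -> Im Q(tau) applied to Q(tau) x, i.e. the
   unique y in Im Q(t) with L(tau,t) y = Q(tau) x. *)
Definition exponential_splitting (R : realType) (X : normedModType R)
  (L : R -> R -> X -> X) (M gamma rho : R) (Q : R -> X -> X) :=
  [/\ 1 <= M /\ rho < gamma,
      (forall t, bounded_linear (Q t) /\ Q t \o Q t = Q t),
      (forall t tau, tau <= t -> Q t \o L t tau = L t tau \o Q tau),
      (forall t tau, tau <= t ->
         {in range (Q tau) &, injective (L t tau)} /\
         L t tau @` range (Q tau) = range (Q t)) &
      (forall t tau (x y : X), t <= tau -> range (Q t) y ->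
         L tau t y = Q tau x ->
         `|y| <= M * expR (- rho * (t - tau)) * `|x|) /\
      (forall t tau (x : X), tau <= t ->
         `|L t tau (x - Q tau x)| <= M * expR (- gamma * (t - tau)) * `|x|)].

(* Main.v *)
Require Import Defs.
From HB Require Import structures.
From mathcomp Require Import all_boot all_order all_algebra.
From mathcomp Require Import all_classical all_reals all_analysis.
Import Order.TTheory GRing.Theory Num.Theory.
Import numFieldNormedType.Exports.
Local Open Scope classical_set_scope.
Local Open Scope ring_scope.

From mathcomp Require Import ring lra.
Lemma decay0 (R : realType) (n C1 C2 a1 a2 : R) : 0 < a1 -> 0 < a2 -> 0 <= C1 -> 0 <= C2 ->
  (forall s, 0 < s -> n <= C1 * expR (- (a1 * s)) + C2 * expR (- (a2 * s))) -> n <= 0.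
Proof.
move=> a1p a2p C1p C2p H.
have h : forall a s : R, 0 < a -> 0 < s -> a * s * expR (- (a * s)) <= 1.
  move=> a s ap sp.
  have e1 : expR (- (a * s)) * expR (a * s) = 1 by rewrite -expRD addNr expR0.
  have := expR_ge1Dx (a * s); have := expR_gt0 (- (a * s)) => ep ge.
  nra.
rewrite leNgt; apply/negP => np.
set K := C1 * a2 + C2 * a1.
have Kp : 0 <= K by rewrite /K; nra.
set s := (K + 1) / (n * a1 * a2).
have na : 0 < n * a1 * a2 by rewrite !mulr_gt0.
have sp : 0 < s.
  rewrite /s; apply: divr_gt0 => //; lra.
have ns : n * a1 * a2 * s = K + 1 by rewrite /s mulrC divfK // gt_eqF.
clearbody s.
have := H s sp; have := h a1 s a1p sp; have := h a2 s a2p sp.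
have := expR_gt0 (- (a1 * s)); have := expR_gt0 (- (a2 * s)).
move=> e2p e1p h2 h1 Hs.
have : n * s * a1 * a2 <= C1 * a2 * (a1 * s * expR (- (a1 * s))) + C2 * a1 * (a2 * s * expR (- (a2 * s))).
  have -> : C1 * a2 * (a1 * s * expR (- (a1 * s))) + C2 * a1 * (a2 * s * expR (- (a2 * s))) =
     (C1 * expR (- (a1 * s)) + C2 * expR (- (a2 * s))) * (s * a1 * a2) by ring.
  have -> : n * s * a1 * a2 = n * (s * a1 * a2) by ring.
  apply: ler_wpM2r => //; rewrite !mulr_ge0 // ltW //.
move=> H3.
have H4 : C1 * a2 * (a1 * s * expR (- (a1 * s))) <= C1 * a2 by rewrite -[leRHS]mulr1 ler_wpM2l // mulr_ge0 // ltW.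
have H5 : C2 * a1 * (a2 * s * expR (- (a2 * s))) <= C2 * a1 by rewrite -[leRHS]mulr1 ler_wpM2l // mulr_ge0 // ltW.
have : n * s * a1 * a2 = K + 1 by rewrite -ns; ring.
rewrite /K; lra.
Qed.

Lemma bl_sub (R : realType) (X : normedModType R) (A : X -> X) :
  bounded_linear A -> forall x y, A (x - y) = A x - A y.
Proof.
move=> [H _] x y; have := H (-1) y x.
rewrite !scaleNr !scale1r => E; by rewrite addrC E addrC.
Qed.
Arguments bl_sub {R X A}.

Theorem lemma3p3 (R : realType) (X : completeNormedModType R)
  (L : R -> R -> X -> X) (M gamma rho : R) (Q : R -> X -> X)
  (Ms gammas rhos : R) (Qs : R -> X -> X) :
  evolution_process L ->
  exponential_splitting L M gamma rho Q ->
  exponential_splitting L Ms gammas rhos Qs ->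
  gammas < gamma ->
  forall t : R,
    range (Qs t) `<=` range (Q t) /\
    [set x | Q t x = 0] `<=` [set x | Qs t x = 0].
Proof.
move=> [Hbl Hid Hcomp Hcont] [[HM Hrg] HQp HQc HQiso [HQb HQf]]
  [[HMs Hrgs] HQsp HQsc HQsiso [HQsb HQsf]] Hg t.
have Qidem : forall t x, Qs t (Qs t x) = Qs t x.
  by move=> t0 x; have := congr1 (fun f => f x) (HQsp t0).2.
have M0 : 0 <= M by apply: le_trans HM.
have Ms0 : 0 <= Ms by apply: le_trans HMs.
have ga : 0 < gamma - rhos by rewrite subr_gt0; apply: lt_trans Hrgs Hg.
have gb : 0 < gammas - rhos by rewrite subr_gt0.
split.
- move=> _ [x0 _ <-]; set y := Qs t x0; exists y => //.
  apply/esym/eqP; rewrite -subr_eq0 -normr_eq0 eq_le normr_ge0 andbT.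
  apply: (@decay0 R _ (M * Ms * `|y|) 0 (gamma - rhos) 1) => //.
    by rewrite !mulr_ge0.
  move=> s sp.
  have hts : t - s <= t by rewrite lerBlDr lerDl ltW.
  have : range (Qs t) y by exists x0.
  rewrite -(HQsiso t (t - s) hts).2 => -[y' hy' Ly'].
  have hb := HQsb (t - s) t y y' hts hy' (etrans Ly' (esym (Qidem t x0))).
  have hw : y - Q t y = L t (t - s) (y' - Q (t - s) y').
    rewrite (bl_sub (Hbl _ _ hts)).
    have := congr1 (fun f => f y') (HQc t (t - s) hts) => /= <-.
    by rewrite Ly'.
  have hf := HQf t (t - s) y' hts.
  rewrite hw; apply: (le_trans hf).
  set e1 := expR (- rhos * (t - s - t)) in hb *.
  set e2 := expR (- gamma * (t - (t - s))) in hf *.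
  have E : e2 * e1 = expR (- ((gamma - rhos) * s)) by rewrite -expRD; congr expR; ring.
  have e2p : 0 <= M * e2 by rewrite mulr_ge0 ?expR_ge0.
  apply: (le_trans (ler_wpM2l e2p hb)).
  rewrite -E mul0r addr0 le_eqVlt; apply/orP; left; apply/eqP; ring.
- move=> x /= Qx0.
  set y := Qs t x.
  apply/eqP; rewrite -normr_eq0 eq_le normr_ge0 andbT.
  apply: (@decay0 R _ (Ms * M * `|x|) (Ms * Ms * `|x|) (gamma - rhos) (gammas - rhos))
    => //; [by rewrite !mulr_ge0 | by rewrite !mulr_ge0 |].
  move=> s sp.
  have tT : t <= t + s by rewrite lerDl ltW.
  set z := L (t + s) t y.
  have hz : Qs (t + s) z = z.
    have := congr1 (fun f => f y) (HQsc (t + s) t tT) => /= ->.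
    by rewrite /y Qidem.
  have hrange : range (Qs t) y by exists x.
  have hb := HQsb t (t + s) z y tT hrange (esym hz).
  have hzeq : z = L (t + s) t x - L (t + s) t (x - Qs t x).
    by rewrite (bl_sub (Hbl _ _ tT)) opprB addrC subrK.
  have hz1 := HQf (t + s) t x tT; rewrite Qx0 subr0 in hz1.
  have hz2 := HQsf (t + s) t x tT.
  have hzn : `|z| <= M * expR (- gamma * (t + s - t)) * `|x|
                 + Ms * expR (- gammas * (t + s - t)) * `|x|.
    by rewrite hzeq; apply: (le_trans (ler_normB _ _)); apply: lerD.
  apply: (le_trans hb).
  set e1 := expR (- rhos * (t - (t + s))) in hb *.
  set e2 := expR (- gamma * (t + s - t)) in hzn *.
  set e3 := expR (- gammas * (t + s - t)) in hzn *.
  have E1 : e1 * e2 = expR (- ((gamma - rhos) * s)) by rewrite -expRD; congr expR; ring.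
  have E2 : e1 * e3 = expR (- ((gammas - rhos) * s)) by rewrite -expRD; congr expR; ring.
  have e1p : 0 <= Ms * e1 by rewrite mulr_ge0 ?expR_ge0.
  apply: (le_trans (ler_wpM2l e1p hzn)).
  rewrite -E1 -E2 le_eqVlt; apply/orP; left; apply/eqP; ring.
Qed.
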